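(* Let $a<b$ and let $f:[a,b]\rightarrow\mathbb{R}$ be a twice continuously differentiable mapping in $(a,b)$ with $f''\in L^2[a,b]$. Then \[ \left|\frac{f(a)+f(b)}{2}-\frac{1}{b-a}\int_{a}^{b}f(t)\,dt\right|\leq \frac{(b-a)^{3/2}}{2\sqrt{3}\pi}\|f''\|_2. \]
   Context: $\|g\|_2=\left(\int_a^b g(t)^2\,dt\right)^{1/2}$. *)

(* Defs.v *)
From HB Require Import structures.
From mathcomp Require Import all_boot all_order all_algebra.
From mathcomp Require Import all_classical all_reals all_analysis.
Set Implicit Arguments. Unset Strict Implicit. Unset Printing Implicit Defensive.
Import Order.TTheory GRing.Theory Num.Theory.
Import numFieldNormedType.Exports.
Local Open Scope classical_set_scope.
Local Open Scope ring_scope.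

Definition L2norm (R : realType) (a b : R) (g : R -> R) : R :=
  Num.sqrt (\int[@lebesgue_measure R]_(t in `[a, b]) (g t ^+ 2)).

Definition inL2 (R : realType) (a b : R) (g : R -> R) : Prop :=
  measurable_fun `[a, b] g /\
  (@lebesgue_measure R).-integrable `[a, b] (fun t => ((g t) ^+ 2)%:E).

(* Main.v *)
Require Import Defs.
From HB Require Import structures.
From mathcomp Require Import all_boot all_order all_algebra.
From mathcomp Require Import all_classical all_reals all_analysis.
From mathcomp Require Import ring lra.
Import Order.TTheory GRing.Theory Num.Theory.
Import numFieldNormedType.Exports.
Local Open Scope classical_set_scope.
Local Open Scope ring_scope.

Lemma cos_ub (R : realType) (y : R) : 0 < y <= 1 ->
  cos y < 1 - y ^+ 2 / 2 + y ^+ 4 / 24.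
Proof.
move=> /andP[y0 y1].
rewrite -(opprK (cos _)) ltrNl; have /cvgN h := @cvg_cos_coeff' R y.
rewrite -(cvg_lim (@Rhausdorff R) h).
apply: (@le_lt_trans _ _ (\sum_(0 <= i < 3) - cos_coeff' y i)).
  do 3 rewrite big_nat_recl//; rewrite big_nil addr0 /cos_coeff'.
  rewrite /= !expr0z !factS fact0 /=.
  rewrite -!exprnP /= (_ : 0.*2 = 0)%N // (_: 1.*2 = 2)%N // (_ : 2.*2 = 4)%N // (_ : (2*(1*1))%N = 2)%N // (_ : (4*(3*(2*(1*1))))%N = 24)%N // expr1 sqrrN expr1n expr0; lra.
rewrite -seriesN lt_sum_lim_series //.
  by move/cvgP in h; by rewrite seriesN.
move=> d.
set n := (3 + d.*2)%N.
have -> : (3 + d.*2.+1)%N = n.+1 by rewrite addnS.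
have on : odd n by rewrite /n oddD odd_double.
rewrite /cos_coeff' -!exprnP -[(-1) ^+ n]signr_odd -[(-1) ^+ n.+1]signr_odd oddS on /=.
rewrite expr1 expr0 mulN1r mul1r doubleS mulNr opprK subr_gt0.
set m := n.*2.
have ym : 0 < y ^+ m by rewrite exprn_gt0.
apply: (@le_lt_trans _ _ (y ^+ m / (m.+2)`!%:R)).
  rewrite ler_wpM2r ?invr_ge0 ?ler0n//.
  apply: ler_wiXn2l => //; first exact: ltW.
  by apply: ltnW; exact: leqnSn.
rewrite ltr_pM2l // ltf_pV2 ?posrE ?ltr0n ?fact_gt0 // ltr_nat (factS m.+1) (factS m) mulnA.
by rewrite -[X in (X < _)%N]mul1n ltn_pmul2r ?fact_gt0.
Qed.

Lemma pi_le (R : realType) : pi <= 79 / 25 :> R.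
Proof.
pose y : R := 79 / 100.
have y0 : 0 < y by rewrite /y; lra.
have y1 : y <= 1 by rewrite /y; lra.
have cu : cos y < 1 - y ^+ 2 / 2 + y ^+ 4 / 24 by apply: cos_ub; rewrite y0 y1.
have hu : (1 - y ^+ 2 / 2 + y ^+ 4 / 24) < 7042 / 10000 by rewrite /y; lra.
have pih := @pihalf_ge1 R.
have cy0 : 0 < cos y.
  by apply: cos_gt0_pihalf; apply/andP; split; rewrite /y; lra.
have c2 : cos (y *+ 2) < 0.
  rewrite cos_mulr2n subr_lt0.
  have : cos y ^+ 2 < (7042 / 10000) ^+ 2.
    by rewrite ltrXn2r //; [exact: ltW | lra].
  lra.
rewrite leNgt; apply/negP => hpi.
have : 0 < cos (y *+ 2).
  by apply: cos_gt0_pihalf; apply/andP; split; rewrite /y; lra.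
lra.
Qed.

Lemma const_bound (R : realType) (L : R) : 0 < L ->
  L^-1 * Num.sqrt (L ^+ 5 / 120) <= L `^ (3 / 2) / (2 * Num.sqrt 3 * pi).
Proof.
move=> L0.
set s := Num.sqrt L.
have s0 : 0 < s by rewrite sqrtr_gt0.
have Ls : L = s ^+ 2 by rewrite sqr_sqrtr // ltW.
have p32 : L `^ (3 / 2) = s ^+ 3.
  rewrite (_ : 3 / 2 = 1 + 2^-1); last by field.
  rewrite powRD; last by rewrite gt_eqF // implybT.
  by rewrite powRr1 ?ltW // powR12_sqrt ?ltW // -/s Ls exprS mulrC.
have q : Num.sqrt (L ^+ 5 / 120) = s ^+ 5 / Num.sqrt 120.
  rewrite sqrtrM; last by rewrite exprn_ge0 // ltW.
  rewrite sqrtrV // Ls -exprM (_ : (2 * 5 = 5 * 2)%N) // exprM sqrtr_sqr.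
  by rewrite ger0_norm // exprn_ge0 // ltW.
have pi0 := @pi_gt0 R.
have pile := pi_le R.
have s3 : 0 < Num.sqrt 3 :> R by rewrite sqrtr_gt0.
have hpi : 2 * Num.sqrt 3 * pi <= Num.sqrt 120 :> R.
  have h2 : (2 * Num.sqrt 3 * pi) ^+ 2 <= (Num.sqrt 120) ^+ 2 :> R.
    rewrite !exprMn !sqr_sqrtr //.
    nra.
  rewrite -(@ler_pXn2r _ 2) // ?nnegrE ?sqrtr_ge0 //.
  by rewrite !mulr_ge0 ?sqrtr_ge0 ?ltW.
rewrite p32 q Ls.
have -> : (s ^+ 2)^-1 * (s ^+ 5 / Num.sqrt 120) = s ^+ 3 / Num.sqrt 120.
  by field; rewrite !gt_eqF // sqrtr_gt0.
rewrite ler_pM2l ?exprn_gt0 // lef_pV2 ?posrE ?sqrtr_gt0 ?mulr_gt0 //.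
Qed.

Notation mu := (@lebesgue_measure _).

Lemma cint (R : realType) (al be : R) (h : R -> R) :
  (forall x, al <= x <= be -> {for x, continuous h}) ->
  (@lebesgue_measure R).-integrable `[al, be] (EFin \o h).
Proof.
move=> hc; apply: continuous_compact_integrable; first exact: segment_compact.
apply: continuous_in_subspaceT => x.
rewrite inE /= in_itv /=; exact: hc.
Qed.

Lemma pt_amgm (R : realType) (s p q : R) : 0 < s ->
  `|p * q| <= (s * p ^+ 2 + s^-1 * q ^+ 2) / 2.
Proof.
move=> s0; rewrite normrM -(real_normK (num_real p)) -(real_normK (num_real q)).
set P := `|p|; set Q := `|q|.
have e : s * P ^+ 2 + s^-1 * Q ^+ 2 - 2 * (P * Q) = (s * P - Q) ^+ 2 * s^-1.
  by field; rewrite gt_eqF.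
have : 0 <= (s * P - Q) ^+ 2 * s^-1 by rewrite mulr_ge0 ?sqr_ge0 ?invr_ge0 ?ltW.
lra.
Qed.

Lemma amgm_int (R : realType) (al be : R) (k g : R -> R) (s : R) : 0 < s ->
  (forall x, al <= x <= be -> {for x, continuous k}) ->
  (forall x, al <= x <= be -> {for x, continuous g}) ->
  `|\int[@lebesgue_measure R]_(t in `[al, be]) (k t * g t)| <=
  (s * \int[@lebesgue_measure R]_(t in `[al, be]) (k t ^+ 2) +
   s^-1 * \int[@lebesgue_measure R]_(t in `[al, be]) (g t ^+ 2)) / 2.
Proof.
move=> s0 ck cg.
have ck2 : forall x, al <= x <= be -> {for x, continuous (fun t => k t ^+ 2)}.
  by move=> x hx; exact: (cvgM (ck x hx) (ck x hx)).
have cg2 : forall x, al <= x <= be -> {for x, continuous (fun t => g t ^+ 2)}.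
  by move=> x hx; exact: (cvgM (cg x hx) (cg x hx)).
apply: le_trans; first apply: le_normr_Rintegral => //.
  by apply: cint => x hx; apply: cvgM; [exact: ck | exact: cg].
rewrite -RintegralZl //; last exact: cint.
rewrite -RintegralZl //; last exact: cint.
rewrite -RintegralD //; first last.
- by apply: cint => x hx; apply: cvgM; [exact: cvg_cst | exact: cg2].
- by apply: cint => x hx; apply: cvgM; [exact: cvg_cst | exact: ck2].
rewrite -RintegralZr //; last first.
  apply: cint => x hx; apply: cvgD.
  + by apply: cvgM; [exact: cvg_cst | exact: ck2].
  + by apply: cvgM; [exact: cvg_cst | exact: cg2].
apply: le_Rintegral => //.
- apply: cint => x hx; apply: cvg_norm; apply: cvgM; [exact: ck | exact: cg].
- apply: cint => x hx; apply: cvgM; last exact: cvg_cst.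
  apply: cvgD.
  + by apply: cvgM; [exact: cvg_cst | exact: ck2].
  + by apply: cvgM; [exact: cvg_cst | exact: cg2].
- by move=> x _; exact: pt_amgm.
Qed.

Lemma cs_alg (R : realType) (I A B : R) : 0 < A -> 0 <= B ->
  (forall s, 0 < s -> I <= (s * A + s^-1 * B) / 2) ->
  I <= Num.sqrt A * Num.sqrt B.
Proof.
move=> A0 B0 H.
have [B00|Bp] := eqVneq B 0.
  rewrite B00 sqrtr0 mulr0; apply/ler_addgt0Pr => e e0.
  have He : 0 < 2 * e / A by rewrite divr_gt0 // mulr_gt0.
  have := H _ He; rewrite B00 mulr0 addr0.
  have -> : 2 * e / A * A / 2 = e by field; rewrite gt_eqF.
  by rewrite add0r.
have Bq : 0 < B by rewrite lt_def Bp B0.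
set u := Num.sqrt A; set v := Num.sqrt B.
have u0 : 0 < u by rewrite sqrtr_gt0.
have v0 : 0 < v by rewrite sqrtr_gt0.
have eA : A = u ^+ 2 by rewrite sqr_sqrtr // ltW.
have eB : B = v ^+ 2 by rewrite sqr_sqrtr.
have vu : 0 < v / u by rewrite divr_gt0.
have := H _ vu.
have -> : (v / u * A + (v / u)^-1 * B) / 2 = u * v.
  by rewrite eA eB; field; rewrite !gt_eqF.
by [].
Qed.

Lemma dK (R : realType) (al be x : R) :
  is_derive x 1 (fun t : R => (t - al) * (be - t) / 2) ((al + be)/2 - x).
Proof.
apply: is_derive_eq.
by rewrite !scaler0 add0r -![_ *: _]/(_ * _); lra.
Qed.

Lemma dP (R : realType) (al be x : R) :
  is_derive x 1 (fun t : R => ((be - al) ^+ 2 * (t - al) ^+ 3 / 3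
     - (be - al) * (t - al) ^+ 4 / 2 + (t - al) ^+ 5 / 5) / 4)
   (((x - al) * (be - x) / 2) ^+ 2).
Proof.
apply: is_derive_eq.
by rewrite !scaler0 -![_ *: _]/(_ * _); field.
Qed.

Lemma intK2 (R : realType) (al be : R) : al < be ->
  \int[@lebesgue_measure R]_(t in `[al, be]) (((t - al) * (be - t) / 2) ^+ 2)
  = (be - al) ^+ 5 / 120.
Proof.
move=> albe.
pose P : R -> R := fun t => ((be - al) ^+ 2 * (t - al) ^+ 3 / 3
     - (be - al) * (t - al) ^+ 4 / 2 + (t - al) ^+ 5 / 5) / 4.
pose k : R -> R := fun t => ((t - al) * (be - t) / 2) ^+ 2.
have ck : forall x, {for x, continuous k}.
  move=> x.
  have cK : {for x, continuous (fun t : R => (t - al) * (be - t) / 2)}.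
    apply: differentiable_continuous; apply/derivable1_diffP.
    by have [] := dK _ al be x.
  exact: (cvgM cK cK).
have cP : forall x, {for x, continuous P}.
  move=> x; apply: differentiable_continuous; apply/derivable1_diffP.
  by have [] := dP _ al be x.
have ftc : (\int[mu]_(x in `[al, be]) (k x)%:E = (P be)%:E - (P al)%:E)%E.
  apply: continuous_FTC2 => //.
  - by apply: continuous_in_subspaceT => x _; exact: ck.
  - split.
    + by move=> x _; have [] := dP _ al be x.
    + exact/cvg_at_right_filter/cP.
    + exact/cvg_at_left_filter/cP.
  - move=> x _; rewrite derive1E; apply: derive_val; exact: dP.
by rewrite /Rintegral [X in fine X]ftc /= /P; field.
Qed.

Lemma sub_int (R : realType) (a b al be : R) (g : R -> R) : a <= al -> be <= b ->
  (@lebesgue_measure R).-integrable `[a, b] (fun t => ((g t) ^+ 2)%:E) ->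
  \int[@lebesgue_measure R]_(t in `[al, be]) (g t ^+ 2) <=
  \int[@lebesgue_measure R]_(t in `[a, b]) (g t ^+ 2).
Proof.
move=> aal beb ig.
have sub : `[al, be] `<=` `[a, b] by apply: subset_itv; rewrite bnd_simp.
have ig' : (@lebesgue_measure R).-integrable `[al, be] (fun t => ((g t) ^+ 2)%:E).
  exact: integrableS ig.
rewrite /Rintegral; apply: fine_le.
- exact: integrable_fin_num.
- exact: integrable_fin_num.
- apply: ge0_subset_integral => //.
  + exact: measurable_int ig.
  + by move=> x _; rewrite lee_fin sqr_ge0.
Qed.

Lemma core (R : realType) (a b al be : R) (f : R -> R) :
  a < al -> al < be -> be < b ->
  (forall x, a < x < b -> derivable f x 1) ->
  (forall x, a < x < b -> derivable (derive1 f) x 1) ->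
  (forall x, a < x < b -> {for x, continuous (derive1 (derive1 f))}) ->
  \int[@lebesgue_measure R]_(t in `[al, be]) ((t - al) * (be - t) / 2 * derive1 (derive1 f) t)
   = (be - al) * (f al + f be) / 2 - \int[@lebesgue_measure R]_(t in `[al, be]) f t.
Proof.
move=> aal albe beb hf hf1 hg.
set f1 : R -> R := derive1 f; set g : R -> R := derive1 f1.
have inab : forall x, al <= x <= be -> a < x < b.
  by move=> x /andP[h1 h2]; apply/andP; split; lra.
have cf : forall x, a < x < b -> {for x, continuous f}.
  by move=> x hx; apply: differentiable_continuous; apply/derivable1_diffP; exact: hf.
have cf1 : forall x, a < x < b -> {for x, continuous f1}.
  by move=> x hx; apply: differentiable_continuous; apply/derivable1_diffP; exact: hf1.
pose K : R -> R := fun t => (t - al) * (be - t) / 2.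
have cK : forall x, {for x, continuous K}.
  move=> x; apply: differentiable_continuous; apply/derivable1_diffP.
  by have := dK _ al be x; case.
pose h : R -> R := fun t => K t * g t + f t.
have ch : forall x, a < x < b -> {for x, continuous h}.
  move=> x hx; apply: cvgD; first apply: cvgM.
  - exact: cK.
  - exact: hg.
  - exact: cf.
pose F : R -> R := fun t => K t * f1 t - ((al + be)/2 - t) * f t.
have dF : forall x, a < x < b -> is_derive x 1 F (h x).
  move=> x hx.
  have df : is_derive x 1 f (f1 x).
    by rewrite /f1 derive1E; apply: derivableP; exact: hf.
  have dg : is_derive x 1 f1 (g x).
    by rewrite /g derive1E; apply: derivableP; exact: hf1.
  have dK' : is_derive x 1 K ((al + be)/2 - x) := dK _ al be x.
  apply: is_derive_eq.
  by rewrite -![_ *: _]/(_ * _) /h; ring.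
have wc : forall k : R -> R, (forall x, a < x < b -> {for x, continuous k}) ->
    {within `[al, be], continuous k}.
  move=> k hk; apply: continuous_in_subspaceT => x.
  rewrite inE /= in_itv /= => /inab; exact: hk.
have ftc : (\int[mu]_(x in `[al, be]) (h x)%:E = (F be)%:E - (F al)%:E)%E.
  apply: continuous_FTC2 => //.
  - exact: wc.
  - split.
    + move=> x; rewrite in_itv /= => /andP[h1 h2].
      have [] := dF x _; first by apply: inab; rewrite !ltW.
      by [].
    + apply: cvg_at_right_filter; apply: differentiable_continuous.
      apply/derivable1_diffP; have [] := dF al _; last by [].
      by apply: inab; rewrite lexx ltW.
    + apply: cvg_at_left_filter; apply: differentiable_continuous.
      apply/derivable1_diffP; have [] := dF be _; last by [].
      by apply: inab; rewrite lexx ltW.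
  - move=> x; rewrite in_itv /= => /andP[h1 h2].
    by rewrite derive1E; apply: derive_val; apply: dF; apply: inab; rewrite !ltW.
have Ih : \int[mu]_(x in `[al, be]) h x = F be - F al by rewrite /Rintegral ftc.
have iKg : mu.-integrable `[al, be] (EFin \o (fun t => K t * g t)).
  apply: continuous_compact_integrable; first exact: segment_compact.
  by apply: wc => x hx; apply: cvgM; [exact: cK | exact: hg].
have iff : mu.-integrable `[al, be] (EFin \o f).
  apply: continuous_compact_integrable; first exact: segment_compact.
  exact: wc.
rewrite /h RintegralD // in Ih.
have eF : F be - F al = (be - al) * (f al + f be) / 2.
  by rewrite /F /K /=; field.
rewrite eF in Ih.
rewrite -Ih /K; ring.
Qed.

Lemma local_bound (R : realType) (a b al be : R) (f : R -> R) :
  a < al -> al < be -> be < b ->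
  (forall x, a < x < b -> derivable f x 1) ->
  (forall x, a < x < b -> derivable (derive1 f) x 1) ->
  (forall x, a < x < b -> {for x, continuous (derive1 (derive1 f))}) ->
  inL2 a b (derive1 (derive1 f)) ->
  `|(be - al) * (f al + f be) / 2 - \int[@lebesgue_measure R]_(t in `[al, be]) f t|
   <= Num.sqrt ((be - al) ^+ 5 / 120) * L2norm a b (derive1 (derive1 f)).
Proof.
move=> aal albe beb hf hf1 hg [_ ig].
rewrite -(core _ _ _ _ _ _ aal albe beb hf hf1 hg).
set g := derive1 (derive1 f).
have inab : forall x, al <= x <= be -> a < x < b.
  by move=> x /andP[h1 h2]; apply/andP; split; lra.
have cK : forall x, {for x, continuous (fun t : R => (t - al) * (be - t) / 2)}.
  move=> x; apply: differentiable_continuous; apply/derivable1_diffP.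
  by have [] := dK _ al be x.
have L0 : 0 < be - al by rewrite subr_gt0.
apply: le_trans.
  apply: (@cs_alg _ _ (\int[@lebesgue_measure R]_(t in `[al, be]) (((t - al) * (be - t) / 2) ^+ 2))
     (\int[@lebesgue_measure R]_(t in `[al, be]) (g t ^+ 2))).
  - by rewrite intK2 // divr_gt0 // exprn_gt0.
  - by apply: Rintegral_ge0 => x _; exact: sqr_ge0.
  - move=> s s0; apply: amgm_int => // x hx.
    by apply: hg; exact: inab.
rewrite intK2 // /L2norm; apply: ler_wpM2l; first exact: sqrtr_ge0.
by rewrite ler_sqrt; [apply: sub_int => //; exact: ltW | apply: Rintegral_ge0 => x _; exact: sqr_ge0].
Qed.

Lemma lim_right (R : realType) (phi : R -> R) (x0 y M : R) : x0 < y ->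
  phi @ x0^'+ --> phi x0 -> (forall x, x0 < x < y -> `|phi x| <= M) ->
  `|phi x0| <= M.
Proof.
move=> xy hc hb; apply: (cvgr_to_le (cvg_norm hc)).
near=> x; apply: hb; apply/andP; split; near: x.
- exact: nbhs_right_gt.
- exact: nbhs_right_lt.
Unshelve. all: by end_near. Qed.

Lemma lim_left (R : realType) (phi : R -> R) (x0 y M : R) : y < x0 ->
  phi @ x0^'- --> phi x0 -> (forall x, y < x < x0 -> `|phi x| <= M) ->
  `|phi x0| <= M.
Proof.
move=> xy hc hb; apply: (cvgr_to_le (cvg_norm hc)).
near=> x; apply: hb; apply/andP; split; near: x.
- exact: nbhs_left_gt.
- exact: nbhs_left_lt.
Unshelve. all: by end_near. Qed.

Lemma split_Phi (R : realType) (a b al be : R) (f : R -> R) :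
  a <= al -> al < be -> be <= b ->
  (@lebesgue_measure R).-integrable `[a, b] (EFin \o f) ->
  \int[@lebesgue_measure R]_(t in `[al, be]) f t =
  \int[@lebesgue_measure R]_(t in `[a, be]) f t - \int[@lebesgue_measure R]_(t in `[a, al]) f t.
Proof.
move=> aal albe beb intf.
have i1 : (@lebesgue_measure R).-integrable `[a, be] (EFin \o f).
  by apply: integrableS intf => //; apply: subset_itv; rewrite bnd_simp.
rewrite Rintegral_itvB //; last by rewrite bnd_simp ltW.
rewrite Rintegral_itv_obnd_cbnd //.
by apply: integrableS i1 => //; apply: subset_itv; rewrite bnd_simp.
Qed.

Theorem corollary2p6 (R : realType) (a b : R) (f : R -> R) :
  a < b ->
  {within `[a, b], continuous f} ->
  (forall x, a < x < b -> derivable f x 1) ->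
  (forall x, a < x < b -> derivable (derive1 f) x 1) ->
  (forall x, a < x < b -> {for x, continuous (derive1 (derive1 f))}) ->
  inL2 a b (derive1 (derive1 f)) ->
  `| (f a + f b) / 2 - (b - a)^-1 * \int[@lebesgue_measure R]_(t in `[a, b]) f t |
    <= (b - a) `^ (3 / 2) / (2 * Num.sqrt 3 * pi) * L2norm a b (derive1 (derive1 f)).
Proof.
move=> ab cf hf hf1 hg hL2.
set N := L2norm a b (derive1 (derive1 f)).
have N0 : 0 <= N by rewrite /N /L2norm sqrtr_ge0.
set C0 := Num.sqrt ((b - a) ^+ 5 / 120) * N.
have intf : (@lebesgue_measure R).-integrable `[a, b] (EFin \o f).
  by apply: continuous_compact_integrable => //; exact: segment_compact.
pose Phi x := \int[@lebesgue_measure R]_(t in `[a, x]) f t.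
have cPhi : {within `[a, b], continuous Phi}.
  exact: parameterized_integral_continuous (ltW ab) intf.
have [_ Phia Phib] := (continuous_within_itvP _ ab).1 cPhi.
have [_ fa fb] := (continuous_within_itvP _ ab).1 cf.
have Phi0 : Phi a = 0 by rewrite /Phi set_itv1 Rintegral_set1.
have loc : forall al be, a < al -> al < be -> be < b ->
    `|(be - al) * (f al + f be) / 2 - (Phi be - Phi al)| <= C0.
  move=> al be h1 h2 h3.
  rewrite /Phi -(split_Phi _ _ _ _ _ _ (ltW h1) h2 (ltW h3) intf).
  apply: le_trans; first exact: (local_bound _ _ _ _ _ _ h1 h2 h3 hf hf1 hg hL2).
  rewrite /C0 ler_wpM2r // ler_sqrt; last first.
    by rewrite divr_ge0 // exprn_ge0 // subr_ge0 ltW.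
  by rewrite ler_pM2r // lerXn2r // ?nnegrE ?subr_ge0 ?ltW //; lra.

have st1 : forall be, a < be -> be < b ->
    `|(be - a) * (f a + f be) / 2 - (Phi be - Phi a)| <= C0.
  move=> be h1 h2.
  apply: (@lim_right _ (fun al => (be - al) * (f al + f be) / 2 - (Phi be - Phi al)) a be C0 h1).
  - apply: cvgB; last by apply: cvgB; [exact: cvg_cst | exact: Phia].
    apply: cvgM; last exact: cvg_cst.
    apply: cvgM.
    + apply: cvgB; first exact: cvg_cst.
      exact: cvg_at_right_filter cvg_id.
    + by apply: cvgD; [exact: fa | exact: cvg_cst].
  - by move=> al /andP[h3 h4]; exact: loc.
have st2 : `|(b - a) * (f a + f b) / 2 - (Phi b - Phi a)| <= C0.
  apply: (@lim_left _ (fun be => (be - a) * (f a + f be) / 2 - (Phi be - Phi a)) b a C0 ab).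
  - apply: cvgB; last by apply: cvgB; [exact: Phib | exact: cvg_cst].
    apply: cvgM; last exact: cvg_cst.
    apply: cvgM.
    + apply: cvgB; last exact: cvg_cst.
      exact: cvg_at_left_filter cvg_id.
    + by apply: cvgD; [exact: cvg_cst | exact: fb].
  - by move=> be /andP[h3 h4]; exact: st1.
rewrite Phi0 subr0 in st2.
have L0 : 0 < b - a by rewrite subr_gt0.
have -> : (f a + f b) / 2 - (b - a)^-1 * \int[@lebesgue_measure R]_(t in `[a, b]) f t
    = (b - a)^-1 * ((b - a) * (f a + f b) / 2 - Phi b).
  by rewrite /Phi; field; rewrite gt_eqF.
rewrite normrM ger0_norm; last by rewrite invr_ge0 ltW.
apply: (@le_trans _ _ ((b - a)^-1 * C0)); first by rewrite ler_wpM2l // invr_ge0 ltW.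
rewrite /C0 mulrA ler_wpM2r //.
exact: const_bound.
Qed.
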